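(* Let PS1 and PS2 be pure strategies (as in the context) with $m_{PS1}$ finite, and suppose PS2 is complementary to PS1, i.e. $\Delta_{PS1}(X)<\Delta_{PS2}(X)$ for some $X\in\mathcal{S}_{\mathrm{non}}$. Then there exists a mixed strategy MS derived from PS1 and PS2 such that $m_{MS}(X)\le m_{PS1}(X)$ for every initial population $X$ and $m_{MS}(X)<m_{PS1}(X)$ for some initial population $X$.
   Context: A fitness function $f$ on a finite set is to be maximised. A metaheuristic generates populations $\Phi_0,\Phi_1,\dots$. Let $\mathcal{S}$ be the finite set of all populations, $\mathcal{S}_{\mathrm{opt}}$ those containing at least one optimal solution, $\mathcal{S}_{\mathrm{non}}=\mathcal{S}\setminus\mathcal{S}_{\mathrm{opt}}$. The sequence is a time-homogeneous Markov chain on $\mathcal{S}$ with transition probabilities $P(X,Y)=\Pr(\Phi_{t+1}=Y\mid\Phi_t=X)$, every state of $\mathcal{S}_{\mathrm{opt}}$ absorbing. The expected hitting time $m(X)\in[0,\infty]$ is the expected number of generations until first entering $\mathcal{S}_{\mathrm{opt}}$ from $\Phi_0=X$ ($m(X)=0$ on $\mathcal{S}_{\mathrm{opt}}$). A pure strategy is such a time-independent transition matrix. PS1, PS2 are pure strategies with transition matrices $P_1,P_2$ on the same $\mathcal{S}$ (with $\mathcal{S}_{\mathrm{opt}}$ absorbing), expected hitting times $m_{PS1},m_{PS2}$. A mixed strategy MS derived from PS1 and PS2 assigns to each $X\in\mathcal{S}$ probabilities $P_X(PS1)\in[0,1]$, $P_X(PS2)=1-P_X(PS1)$, and has transition matrix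 $P_{MS}(X,Y)=P_X(PS1)P_1(X,Y)+P_X(PS2)P_2(X,Y)$, with expected hitting time $m_{MS}$. With $d(X)=m_{PS1}(X)$, for $X\in\mathcal{S}_{\mathrm{non}}$: $\Delta_{PS1}(X)=d(X)-\sum_{Y\in\mathcal{S}_{\mathrm{non}}}P_1(X,Y)d(Y)$, $\Delta_{PS2}(X)=d(X)-\sum_{Y\in\mathcal{S}_{\mathrm{non}}}P_2(X,Y)d(Y)$. *)

(* Defs.v *)
From mathcomp Require Import all_boot all_order all_algebra.
From mathcomp Require Import all_classical all_reals all_analysis.
Set Implicit Arguments. Unset Strict Implicit. Unset Printing Implicit Defensive.
Import Order.TTheory GRing.Theory Num.Theory.
Local Open Scope ring_scope.

Section Hitting.
Variables (R : realType) (S : finType) (opt : {pred S}).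

Definition transition_matrix (P : S -> S -> R) : Prop :=
  [/\ (forall X Y, 0 <= P X Y),
      (forall X, \sum_(Y : S) P X Y = 1) &
      (forall X, X \in opt -> P X X = 1)].

(* surv P t X = Pr(Phi_0, ..., Phi_t all lie in S_non | Phi_0 = X)
             = Pr(T > t | Phi_0 = X), T the first hitting time of S_opt. *)
Fixpoint surv (P : S -> S -> R) (t : nat) (X : S) : R :=
  if X \in opt then 0 else
  match t with
  | 0 => 1
  | t'.+1 => \sum_(Y : S) P X Y * surv P t' Y
  end.

(* expected hitting time m(X) = E[T] = sum_{t>=0} Pr(T > t), in [0, +oo] *)
Definition hit_time (P : S -> S -> R) (X : S) : \bar R :=
  (\sum_(0 <= t <oo) (surv P t X)%:E)%E.

Definition Delta (P1 P : S -> S -> R) (X : S) : R :=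
  fine (hit_time P1 X) -
  \sum_(Y : S | Y \notin opt) P X Y * fine (hit_time P1 Y).

Definition mixed (q : S -> R) (P1 P2 : S -> S -> R) : S -> S -> R :=
  fun X Y => q X * P1 X Y + (1 - q X) * P2 X Y.

End Hitting.

(* Main.v *)
Require Import Defs.
From mathcomp Require Import all_boot all_order all_algebra.
From mathcomp Require Import all_classical all_reals all_analysis.
Import Order.TTheory GRing.Theory Num.Theory.
Local Open Scope ring_scope.

Section Aux.
Variables (R : realType) (S : finType) (opt : {pred S}).

Definition nonneg (Q : S -> S -> R) := forall X Y, 0 <= Q X Y.
Implicit Types (Q : S -> S -> R) (X : S).

Lemma surv_ge0 {Q} : nonneg Q -> forall t X, 0 <= surv opt Q t X.
Proof.
move=> Q0; elim=> [|t IH] X /=; case: ifP => // _.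
by apply: sumr_ge0 => Y _; apply: mulr_ge0.
Qed.

Lemma surv_opt Q t X : X \in opt -> surv opt Q t X = 0.
Proof. by case: t => [|t] /= ->. Qed.

Lemma bellman {Q X} : nonneg Q -> X \notin opt ->
  hit_time opt Q X = (1 + \sum_(Y : S) (Q X Y)%:E * hit_time opt Q Y)%E.
Proof.
move=> Q0 nX.
have s0 := surv_ge0 Q0.
rewrite /hit_time (nneseries_split 0 1); last by move=> k _; rewrite lee_fin.
rewrite add0n big_nat1 /= (negbTE nX).
congr (_ + _)%E.
rewrite -nneseries_addn; last by move=> i; rewrite lee_fin.
rewrite (@eq_eseriesr _ _ (fun t => \sum_(Y : S) (Q X Y)%:E * (surv opt Q t Y)%:E)%E); last first.
  by move=> i _; rewrite addn1 /= (negbTE nX) -sumEFin; apply: eq_bigr => Y _; rewrite EFinM.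
rewrite nneseries_sum; last by move=> Y j _; rewrite -EFinM lee_fin mulr_ge0.
apply: eq_bigr => Y _; rewrite nneseriesZl //.
by move=> i _; rewrite lee_fin.
Qed.

Lemma partial_le Q (f : S -> R) : nonneg Q -> (forall X, 0 <= f X) ->
  (forall X, X \notin opt -> 1 + \sum_(Y : S) Q X Y * f Y <= f X) ->
  forall n X, \sum_(0 <= t < n) surv opt Q t X <= f X.
Proof.
move=> Q0 f0 hf; elim=> [|n IH] X; first by rewrite big_geq.
have [xo|nX] := boolP (X \in opt).
  by rewrite big1 // => t _; rewrite surv_opt.
rewrite big_nat_recl //= (negbTE nX).
apply: le_trans (hf X nX); rewrite lerD2l.
rewrite exchange_big /=.
apply: ler_sum => Y _; rewrite -mulr_sumr; apply: ler_wpM2l => //.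
Qed.

Lemma hit_le {Q} {f : S -> R} : nonneg Q -> (forall X, 0 <= f X) ->
  (forall X, X \notin opt -> 1 + \sum_(Y : S) Q X Y * f Y <= f X) ->
  forall X, (hit_time opt Q X <= (f X)%:E)%E.
Proof.
move=> Q0 f0 hf X; rewrite /hit_time; apply: lime_le.
  by apply: is_cvg_nneseries => n _ _; rewrite lee_fin surv_ge0.
by apply: nearW => n; rewrite sumEFin lee_fin partial_le.
Qed.

End Aux.
Arguments nonneg {R S}.
Arguments surv_ge0 {R S opt Q}.
Arguments surv_opt {R S opt} Q t X.
Arguments bellman {R S opt Q X}.
Arguments hit_le {R S opt Q f}.

Theorem lemma3 (R : realType) (S : finType) (opt : {pred S})
  (P1 P2 : S -> S -> R) :
  transition_matrix opt P1 -> transition_matrix opt P2 ->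
  (forall X, (hit_time opt P1 X < +oo)%E) ->
  (exists X, X \notin opt /\ Delta opt P1 P1 X < Delta opt P1 P2 X) ->
  exists q : S -> R,
    (forall X, 0 <= q X <= 1) /\
    (forall X, (hit_time opt (mixed q P1 P2) X <= hit_time opt P1 X)%E) /\
    (exists X, (hit_time opt (mixed q P1 P2) X < hit_time opt P1 X)%E).
Proof.
move=> [P10 P1s P1o] [P20 P2s P2o] fin [X0 [nX0 hX0]].
pose d := fun X => fine (hit_time opt P1 X).
have hge0 X : (0 <= hit_time opt P1 X)%E.
  by apply: nneseries_ge0 => n _ _; rewrite lee_fin (surv_ge0 P10).
have dE X : hit_time opt P1 X = (d X)%:E by rewrite fineK // ge0_fin_numE.
have d0 X : 0 <= d X by rewrite /d fine_ge0.
have dopt X : X \in opt -> d X = 0.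
  by move=> xo; rewrite /d /hit_time eseries0 // => i _ _; rewrite surv_opt.
have bell X : X \notin opt -> d X = 1 + \sum_(Y : S) P1 X Y * d Y.
  move=> nX; apply/EFin_inj; rewrite -dE (bellman P10 nX) EFinD -sumEFin.
  by congr (_ + _)%E; apply: eq_bigr => Y _; rewrite dE EFinM.
have sumnon (P : S -> S -> R) X :
    \sum_(Y | Y \notin opt) P X Y * d Y = \sum_(Y : S) P X Y * d Y.
  rewrite [RHS](bigID (mem opt)) /= [X in _ = X + _]big1 ?add0r // => Y /dopt ->.
  by rewrite mulr0.
move: hX0; rewrite /Delta -/d !sumnon ltrD2l ltrN2 => hX0.
have strict : 1 + \sum_(Y : S) P2 X0 Y * d Y < d X0.
  by rewrite [Z in _ < Z]bell // ltrD2l.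
pose q := fun X : S => if X == X0 then (0 : R) else 1.
have QE X Y : mixed q P1 P2 X Y = if X == X0 then P2 X Y else P1 X Y.
  rewrite /mixed /q; case: ifP => _.
    by rewrite mul0r add0r subr0 mul1r.
  by rewrite mul1r subrr mul0r addr0.
have Q0 : nonneg (mixed q P1 P2).
  by move=> X Y; rewrite QE; case: ifP.
have hf X : X \notin opt ->
    1 + \sum_(Y : S) mixed q P1 P2 X Y * d Y <= d X.
  move=> nX; have [->|ne] := eqVneq X X0.
    rewrite (eq_bigr (fun Y => P2 X0 Y * d Y)) => [|Y _]; last by rewrite QE eqxx.
    exact: ltW.
  rewrite (eq_bigr (fun Y => P1 X Y * d Y)) => [|Y _]; last by rewrite QE (negbTE ne).
  by rewrite [Z in _ <= Z]bell.
have HL := hit_le Q0 d0 hf.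
exists q; split; [|split].
- by move=> X; rewrite /q; case: ifP => _; rewrite ?lexx ?ler01.
- by move=> X; rewrite dE.
- exists X0; rewrite (bellman Q0 nX0) dE.
  apply: (@le_lt_trans _ _ (1 + \sum_(Y : S) P2 X0 Y * d Y)%:E); last by rewrite lte_fin.
  rewrite EFinD -sumEFin; apply: leeD2l; apply: lee_sum => Y _.
  rewrite QE eqxx EFinM; apply: lee_wpmul2l; first by rewrite lee_fin.
  exact: HL.
Qed.
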